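(* Let $X$ be a compact metric space, $f_1,f_2:X\to X$ continuous and $F=\{f_1,f_2\}$. Suppose $F$ has the (Hausdorff metric) shadowing property. Then $F$ is chain mixing if and only if $F$ is mixing.
   Context: Throughout, $(X,d)$ is a compact metric space, $\mathbb{N}=\{0,1,2,\dots\}$, $\mathbb{Z}^+=\{1,2,\dots\}$. $\mathbb{K}(X)$ is the set of nonempty compact subsets of $X$ with the Hausdorff metric $d_H(A,B)=\max\{\sup_{a\in A}\inf_{b\in B}d(a,b),\sup_{b\in B}\inf_{a\in A}d(a,b)\}$; a point $x$ is identified with $\{x\}$. Multiple mappings: $F=\{f_1,f_2\}$ maps $x$ to $F(x)=\{f_1(x),f_2(x)\}$; for $n\ge1$, $F^n(x)=\{f_{i_1}\cdots f_{i_n}(x): i_1,\dots,i_n\in\{1,2\}\}$, $F^0(x)=\{x\}$; for $A\in\mathbb{K}(X)$, $F^n(A)=\bigcup_{a\in A}F^n(a)$. Let $Ran(F)=\{F^n(x): n\ge1, x\in X\}\subset\mathbb{K}(X)$, with the topology induced by $d_H$. Shadowing: a sequence $\{A_n\}_{n\ge0}\subset\mathbb{K}(X)$ with $A_0$ a singleton is a $\delta$-pseudo orbit of $F$ if $d_H(F(A_n),A_{n+1})\le\delta$ for all $n\in\mathbb{N}$. $F$ has the shadowing property if for every $\epsilon>0$ there is $\delta>0$ such that for every $\delta$-pseudo orbit $\{A_n\}$ there is $y\in X$ with $d_H(F^n(y),A_n)<\epsilon$ for all $n\in\mathbb{N}$. A $\delta$-chain of $F$ from $x\in X$ to $A\in\mathbb{K}(X)$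 of length $m$ is a finite sequence $A_0=\{x\},A_1,\dots,A_m=A$ in $\mathbb{K}(X)$ with $d_H(F(A_i),A_{i+1})\le\delta$ for $0\le i<m$. $F$ is mixing if for all nonempty open $U\subset X$ and nonempty open $\mathcal U\subset Ran(F)$ there is $N\in\mathbb{Z}^+$ such that $\{F^n(u):u\in U\}\cap\mathcal U\ne\emptyset$ for all $n\ge N$. $F$ is chain mixing if for all $x\in X$, $A\in Ran(F)$ and $\delta>0$ there is $N\in\mathbb{Z}^+$ such that for every $n\ge N$ there is a $\delta$-chain of $F$ from $x$ to $A$ of length $n$. *)

(* Defs.v *)
From Stdlib Require List.
From HB Require Import structures.
From mathcomp Require Import all_boot all_order all_algebra.
From mathcomp Require Import boolp classical_sets reals.
Set Implicit Arguments. Unset Strict Implicit. Unset Printing Implicit Defensive.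
Import Order.TTheory GRing.Theory Num.Theory.
Local Open Scope classical_set_scope.
Local Open Scope ring_scope.

Section Defs.
Context {R : realType} {X : Type} (d : X -> X -> R).

Definition is_metric : Prop :=
  (forall x y, 0 <= d x y) /\ (forall x y, d x y = 0 <-> x = y) /\
  (forall x y, d x y = d y x) /\ (forall x y z, d x z <= d x y + d y z).

Definition mopen (U : set X) : Prop :=
  forall x, U x -> exists r, 0 < r /\ forall y, d x y < r -> U y.

Definition mcompact (A : set X) : Prop :=
  forall (I : Type) (G : I -> set X), (forall i, mopen (G i)) ->
    (forall a, A a -> exists i, G i a) ->
    exists s : list I, forall a, A a -> exists i, List.In i s /\ G i a.

Definition mcontinuous (f : X -> X) : Prop :=
  forall x e, 0 < e -> exists r, 0 < r /\ forall y, d x y < r -> d (f x) (f y) < e.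

Definition KX (A : set X) : Prop := A !=set0 /\ mcompact A.

Definition hdist (A B : set X) : R :=
  Num.max (sup [set inf [set d a b | b in B] | a in A])
          (sup [set inf [set d a b | a in A] | b in B]).

Variables f1 f2 : X -> X.

Definition Fset (A : set X) : set X := [set y | exists2 a, A a & (y = f1 a \/ y = f2 a)].

Fixpoint Fn (n : nat) (x : X) : set X :=
  match n with
  | O => [set x]
  | S m => Fset (Fn m x)
  end.

Definition RanF : set (set X) := [set A | exists n x, (1 <= n)%N /\ A = Fn n x].

Definition ran_open (U : set (set X)) : Prop :=
  U `<=` RanF /\
  forall A, U A -> exists r, 0 < r /\ forall B, RanF B -> hdist A B < r -> U B.

Definition pseudo_orbit (delta : R) (A : nat -> set X) : Prop :=
  (exists x, A 0%N = [set x]) /\ (forall n, KX (A n)) /\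
  (forall n, hdist (Fset (A n)) (A n.+1) <= delta).

Definition shadowing : Prop :=
  forall eps, 0 < eps -> exists delta, 0 < delta /\
    forall A, pseudo_orbit delta A ->
      exists y, forall n, hdist (Fn n y) (A n) < eps.

Definition chain (delta : R) (x : X) (A : set X) (m : nat) : Prop :=
  exists B : nat -> set X,
    B 0%N = [set x] /\ B m = A /\ (forall i, (i <= m)%N -> KX (B i)) /\
    (forall i, (i < m)%N -> hdist (Fset (B i)) (B i.+1) <= delta).

Definition mixing : Prop :=
  forall (U : set X) (V : set (set X)),
    mopen U -> U !=set0 -> ran_open V -> V !=set0 ->
    exists N, (1 <= N)%N /\ forall n, (N <= n)%N -> exists2 u, U u & V (Fn n u).

Definition chain_mixing : Prop :=
  forall x A delta, RanF A -> 0 < delta ->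
    exists N, (1 <= N)%N /\ forall n, (N <= n)%N -> chain delta x A n.

End Defs.

(* Main.v *)
Require Import Defs.
From mathcomp Require Import all_boot all_order all_algebra.
From mathcomp Require Import boolp classical_sets reals.
From mathcomp Require Import lra.
From Stdlib Require List.
Set Implicit Arguments. Unset Strict Implicit. Unset Printing Implicit Defensive.
Import Order.TTheory GRing.Theory Num.Theory.
Local Open Scope classical_set_scope.
Local Open Scope ring_scope.

Section Aux.
Variables (R : realType) (X : Type) (d : X -> X -> R).
Hypothesis hm : is_metric d.

Definition finne (S : set X) :=
  (exists l : list X, forall y, S y <-> List.In y l) /\ S !=set0.

Definition close (A B : set X) (e : R) :=
  (forall a, A a -> exists2 b, B b & d a b < e) /\
  (forall b, B b -> exists2 a, A a & d a b < e).

Lemma d_ge0 x y : 0 <= d x y. Proof. by case: hm. Qed.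
Lemma d_sym x y : d x y = d y x. Proof. by case: hm => _ [_ []]. Qed.
Lemma d_tri x y z : d x z <= d x y + d y z. Proof. by case: hm => _ [_ []]. Qed.
Lemma d_xx x : d x x = 0. Proof. by case: hm => _ [h _]; apply/h. Qed.

Lemma list_ub (l : list X) (g : X -> R) :
  exists M, forall y, List.In y l -> g y <= M.
Proof.
elim: l => [|a l [M HM]]; first by exists 0.
exists (Num.max (g a) M) => y /= [<-|Hy]; first by rewrite le_max lexx.
by rewrite le_max HM // orbT.
Qed.

Lemma list_lt (l : list X) (g : X -> R) e :
  (forall y, List.In y l -> g y < e) ->
  exists2 e', e' < e & forall y, List.In y l -> g y <= e'.
Proof.
elim: l => [|a l IH] H; first by exists (e - 1) => //; lra.
have [e' he' He'] : exists2 e', e' < e & forall y, List.In y l -> g y <= e'.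
  by apply: IH => y hy; apply: H; right.
exists (Num.max (g a) e'); first by rewrite gt_max he' andbT; apply: H; left.
move=> y /= [<-|Hy]; first by rewrite le_max lexx.
by rewrite le_max He' // orbT.
Qed.

Lemma sup_fin_lt (A : set X) (g : X -> R) e : finne A ->
  sup [set g a | a in A] < e <-> (forall a, A a -> g a < e).
Proof.
move=> [[l Hl] [a0 Ha0]]; split.
  move=> hs a Aa; apply: le_lt_trans hs.
  have [M HM] := list_ub l g.
  apply: ub_le_sup; last by exists a.
  by exists M => _ [b Bb <-]; apply/HM/Hl.
move=> H.
have [e' he' He'] := @list_lt l g e (fun y hy => H _ (proj2 (Hl y) hy)).
apply: le_lt_trans he'; apply: ge_sup; first by exists (g a0), a0.
by move=> _ [b Bb <-]; apply/He'/Hl.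
Qed.

Lemma inf_d_lt (B : set X) a e : B !=set0 ->
  inf [set d a b | b in B] < e <-> exists2 b, B b & d a b < e.
Proof.
move=> ne; split.
  move=> /inf_lt; case.
    by case: ne => b Bb; exists (d a b), b.
  by move=> _ [b Bb <-] h; exists b.
move=> [b Bb h]; apply: le_lt_trans h.
apply: ge_inf; last by exists b.
by exists 0 => _ [c _ <-]; apply: d_ge0.
Qed.

Lemma inf_d_lt' (A : set X) b e : A !=set0 ->
  inf [set d a b | a in A] < e <-> exists2 a, A a & d a b < e.
Proof.
move=> ne; split.
  move=> /inf_lt; case.
    by case: ne => a Aa; exists (d a b), a.
  by move=> _ [a Aa <-] h; exists a.
move=> [a Aa h]; apply: le_lt_trans h.
apply: ge_inf; last by exists a.
by exists 0 => _ [c _ <-]; apply: d_ge0.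
Qed.

Lemma hdist_close A B e : finne A -> finne B -> hdist d A B < e <-> close A B e.
Proof.
move=> fA fB; rewrite /hdist /close gt_max.
split.
  move=> /andP [h1 h2]; split.
    move=> a Aa; apply/(inf_d_lt _ _ fB.2).
    by move: h1 => /(sup_fin_lt _ _ fA); apply.
  move=> b Bb; apply/(inf_d_lt' _ _ fA.2).
  by move: h2 => /(sup_fin_lt _ _ fB); apply.
move=> [h1 h2]; apply/andP; split.
  apply/(sup_fin_lt (fun a => inf [set d a b | b in B]) _ fA) => a Aa.
  by apply/(inf_d_lt _ _ fB.2); apply: h1.
apply/(sup_fin_lt (fun b => inf [set d a b | a in A]) _ fB) => b Bb.
by apply/(inf_d_lt' _ _ fA.2); apply: h2.
Qed.

Lemma close_sym A B e : close A B e -> close B A e.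
Proof.
move=> [h1 h2]; split.
  by move=> b /h2 [a Aa h]; exists a; rewrite // d_sym.
by move=> a /h1 [b Bb h]; exists b; rewrite // d_sym.
Qed.

Lemma close_refl A e : 0 < e -> close A A e.
Proof. by move=> he; split=> a Aa; exists a; rewrite // d_xx. Qed.

Lemma close_trans A B C e1 e2 : close A B e1 -> close B C e2 -> close A C (e1 + e2).
Proof.
move=> [h1 h2] [k1 k2]; split.
  move=> a /h1 [b Bb hab]; have [c Cc hbc] := k1 b Bb.
  exists c => //; apply: le_lt_trans (d_tri a b c) _; exact: ltrD.
move=> c /k2 [b Bb hbc]; have [a Aa hab] := h2 b Bb.
exists a => //; apply: le_lt_trans (d_tri a b c) _; exact: ltrD.
Qed.

Lemma hdist_sym A B e : finne A -> finne B -> hdist d A B < e -> hdist d B A < e.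
Proof. by move=> fA fB /hdist_close-/(_ fA fB)/close_sym/hdist_close; apply. Qed.

Lemma finne_set1 x : finne [set x].
Proof.
split; last by exists x.
by exists [:: x] => y /=; split=> [->|[->|[]]]; [left|].
Qed.

Lemma list_compact (l : list X) (I : Type) (G : I -> set X) :
  (forall a, List.In a l -> exists i, G i a) ->
  exists s : list I, forall a, List.In a l -> exists i, List.In i s /\ G i a.
Proof.
elim: l => [|a l IH] H; first by exists nil.
have [s Hs] := IH (fun y hy => H y (or_intror hy)).
have [i Hi] := H a (or_introl erefl).
exists (i :: s) => y /= [<-|hy]; first by exists i; split=> //; left.
by have [j [hj Gj]] := Hs y hy; exists j; split=> //; right.
Qed.

Lemma finne_KX S : finne S -> KX d S.
Proof.
move=> [[l Hl] ne]; split=> // I G _ cov.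
have [s Hs] := @list_compact l I G (fun a ha => cov a (proj2 (Hl a) ha)).
by exists s => a /Hl; apply: Hs.
Qed.

Lemma hdist_le A B e : finne A -> finne B -> close A B e -> hdist d A B <= e.
Proof. by move=> fA fB /(hdist_close e fA fB)/ltW. Qed.

Variables f1 f2 : X -> X.

Lemma finne_Fset S : finne S -> finne (Fset f1 f2 S).
Proof.
move=> [[l Hl] [a Sa]]; split; last by exists (f1 a), a; [|left].
exists (List.flat_map (fun a => [:: f1 a; f2 a]) l) => y.
rewrite List.in_flat_map; split.
  move=> [b Sb [->|->]]; exists b; (split; [exact/Hl|]) => /=; [left|right; left] => //.
move=> [b [/(proj2 (Hl _)) Sb /= [<-|[<-|[]]]]]; exists b => //; [left|right] => //.
Qed.

Lemma finne_Fn n x : finne (Fn f1 f2 n x).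
Proof. by elim: n => [|n IH] /=; [apply: finne_set1|apply: finne_Fset]. Qed.

Lemma finne_RanF A : RanF f1 f2 A -> finne A.
Proof. by move=> [n [x [_ ->]]]; apply: finne_Fn. Qed.

End Aux.

Lemma cm_mix (R : realType) (X : Type) (d : X -> X -> R) (f1 f2 : X -> X) :
  is_metric d -> shadowing d f1 f2 -> chain_mixing d f1 f2 -> mixing d f1 f2.
Proof.
move=> hm sh cm U V hU [x Ux] [VR hV] [A VA].
have [r [r0 hr]] := hU x Ux.
have [r' [r'0 hr']] := hV A VA.
have RA := VR A VA.
have [m [x' [m1 eA]]] := RA.
have e0 : 0 < Num.min r r' by rewrite lt_min r0 r'0.
have [delta [d0 hd]] := sh _ e0.
have [N [N1 HN]] := cm x A delta RA d0.
exists N; split => // n Nn.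
have n1 : (0 < n)%N := leq_trans N1 Nn.
have [B [B0 [Bn [BK Bh]]]] := HN n Nn.
pose P k := if (k < n)%N then B k else Fn f1 f2 (m + (k - n)) x'.
have PO : pseudo_orbit d f1 f2 delta P.
  split; first by exists x; rewrite /P n1.
  split.
    move=> k; rewrite /P; case: ltnP => hk.
      by apply: BK; exact: ltnW.
    by apply: finne_KX; apply: finne_Fn.
  move=> k; rewrite /P.
  case: (ltnP k.+1 n) => hk1.
    by rewrite (ltnW hk1); apply: Bh; exact: ltnW.
  case: (ltnP k n) => hk.
    have en : n = k.+1 by apply/eqP; rewrite eqn_leq hk hk1.
    rewrite -{1}en subnn addn0 -eA.
    by have := Bh k hk; rewrite -en Bn.
  rewrite subSn // addnS /=.
  apply: hdist_le => //; try apply: finne_Fset; try apply: finne_Fn.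
  exact: close_refl.
have [y hy] := hd P PO.
exists y.
  apply: hr.
  have := hy 0%N; rewrite /P n1 B0 /=.
  move/(hdist_close hm _ (finne_set1 y) (finne_set1 x)) => [h1 _].
  have [b -> hb] := h1 y erefl.
  by move: hb; rewrite lt_min (d_sym hm) => /andP[].
apply: hr'; first by exists n, y; split.
have := hy n; rewrite /P ltnn subnn addn0 -eA => h.
apply: (hdist_sym hm (finne_Fn _ _ _ _) (finne_RanF RA)).
by apply: lt_le_trans h _; rewrite ge_min lexx orbT.
Qed.

Lemma mix_cm (R : realType) (X : Type) (d : X -> X -> R) (f1 f2 : X -> X) :
  is_metric d -> mcontinuous d f1 -> mcontinuous d f2 ->
  mixing d f1 f2 -> chain_mixing d f1 f2.
Proof.
move=> hm c1 c2 mx x A delta RA d0.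
have [r1 [r10 hr1]] := c1 x delta d0.
have [r2 [r20 hr2]] := c2 x delta d0.
pose U := [set u | d x u < Num.min r1 r2].
pose V := [set C | RanF f1 f2 C /\ hdist d A C < delta].
have hU : mopen d U.
  move=> u Uu; exists (Num.min r1 r2 - d x u); split; first by rewrite subr_gt0.
  move=> z hz; rewrite /U /=; apply: le_lt_trans (d_tri hm x u z) _.
  by rewrite addrC -ltrBrDr.
have hV : ran_open d f1 f2 V.
  split; first by move=> C [].
  move=> C [RC hC].
  set h := hdist d A C.
  exists ((delta - h) / 2); split; first by rewrite divr_gt0 // subr_gt0.
  move=> D RD hCD; split => //.
  have cAC : close d A C (h + (delta - h) / 2).
    apply/(hdist_close hm _ (finne_RanF RA) (finne_RanF RC)).
    rewrite /h; lra.
  have cCD := proj1 (hdist_close hm _ (finne_RanF RC) (finne_RanF RD)) hCD.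
  have := close_trans hm cAC cCD.
  move/(hdist_close hm _ (finne_RanF RA) (finne_RanF RD)).
  by have -> : h + (delta - h) / 2 + (delta - h) / 2 = delta by lra.
have Ux : U x by rewrite /U /= (d_xx hm) lt_min r10 r20.
have VA : V A.
  split => //; apply/(hdist_close hm _ (finne_RanF RA) (finne_RanF RA)).
  exact: close_refl.
have [N [N1 HN]] := mx U V hU (ex_intro _ x Ux) hV (ex_intro _ A VA).
exists (maxn N 2); split; first by rewrite leq_max N1.
move=> n; rewrite geq_max => /andP [Nn n2].
have [u Uu [_ Vn]] := HN n Nn.
move: Uu; rewrite /U /= lt_min => /andP [u1 u2].
pose B i := if i == 0%N then [set x] else if (i < n)%N then Fn f1 f2 i u else A.
have n0 : (n == 0%N) = false by case: n n2 {Nn Vn B}.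
exists B; split; first by rewrite /B eqxx.
split; first by rewrite /B n0 ltnn.
split.
  move=> i _; rewrite /B; case: eqP => _; first exact/finne_KX/finne_set1.
  case: ifP => _; first exact/finne_KX/finne_Fn.
  apply: finne_KX; exact: finne_RanF RA.
move=> i hi; rewrite /B.
case: (eqVneq i 0%N) => [->|i0].
  rewrite /= ifT //.
  apply: hdist_le => //; first exact/finne_Fset/finne_set1.
    exact/finne_Fset/finne_set1.
  split.
    move=> a [x0 -> [->|->]].
      by exists (f1 u); [exists u => //; left | apply: hr1].
    by exists (f2 u); [exists u => //; right | apply: hr2].
  move=> b [u0 -> [->|->]].
    by exists (f1 x); [exists x => //; left | apply: hr1].
  by exists (f2 x); [exists x => //; right | apply: hr2].
rewrite /=.
case: (ltnP i.+1 n) => h1.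
  rewrite hi.
  apply: hdist_le => //; try apply: finne_Fset; try apply: finne_Fn.
  exact: close_refl.
have en : i.+1 = n by apply/eqP; rewrite eqn_leq hi h1.
rewrite hi.
have -> : Fset f1 f2 (Fn f1 f2 i u) = Fn f1 f2 n u by rewrite -en.
apply: ltW; apply: (hdist_sym hm (finne_RanF RA) (finne_Fn _ _ _ _)).
exact: Vn.
Qed.

Theorem theorem5p1 (R : realType) (X : Type) (d : X -> X -> R)
  (f1 f2 : X -> X) :
  is_metric d -> mcompact d setT ->
  mcontinuous d f1 -> mcontinuous d f2 ->
  shadowing d f1 f2 ->
  (chain_mixing d f1 f2 <-> mixing d f1 f2).
Proof.
move=> hm _ c1 c2 sh; split; [exact: cm_mix | exact: mix_cm].
Qed.
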